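(* If $\oplus$ is the drastic maximum $T_d'$ and $\otimes$ is a $T$-norm with no zero divisors, then $(\otimes,\oplus)$ satisfies the rearrangement inequality. If $\otimes$ is the drastic minimum $T_d$ and $\oplus$ is a $T$-conorm such that the $T$-norm $\Phi(\oplus)(x,y)=1-((1-x)\oplus(1-y))$ has no zero divisors, then $(\otimes,\oplus)$ satisfies the dual rearrangement inequality.
   Context: A uninorm is a function $\otimes:[0,1]^2\to[0,1]$ that is commutative, associative, monotonic ($x\leq y$ implies $x\otimes z\leq y\otimes z$), and has an identity element; a $T$-norm is a uninorm with identity $1$, a $T$-conorm one with identity $0$. For a $T$-norm $f$, a number $0<x<1$ is a zero divisor if there is $0<y<1$ with $f(x,y)=0$. The drastic minimum is $T_d(x,y)=\min(x,y)$ if $\max(x,y)=1$ and $0$ otherwise; the drastic maximum is $T_d'(x,y)=\max(x,y)$ if $\min(x,y)=0$ and $1$ otherwise. $(\otimes,\oplus)$ satisfies the rearrangement inequality if for every $n\geq1$, all $0\leq x_1\leq\cdots\leq x_n\leq 1$, $0\leq y_1\leq\cdots\leq y_n\leq 1$ and every permutation $\sigma$ of $\{1,\dots,n\}$, $$(x_n\otimes y_1)\oplus\cdots\oplus(x_1\otimes y_n)\leq (x_{\sigma(1)}\otimes y_1)\oplus\cdots\oplus(x_{\sigma(n)}\otimes y_n)\leq (x_1\otimes y_1)\oplus\cdots\oplus(x_n\otimes y_n),$$ and the dual rearrangement inequality if for all such data $$(x_n\oplus y_1)\otimes\cdots\otimes(x_1\oplus y_n)\geq (x_{\sigma(1)}\oplus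 y_1)\otimes\cdots\otimes(x_{\sigma(n)}\oplus y_n)\geq (x_1\oplus y_1)\otimes\cdots\otimes(x_n\oplus y_n).$$ *)

(* Defs.v *)
From HB Require Import structures.
From mathcomp Require Import all_boot all_order all_algebra all_fingroup.
From mathcomp Require Import reals.
Set Implicit Arguments. Unset Strict Implicit. Unset Printing Implicit Defensive.
Import Order.TTheory GRing.Theory Num.Theory.
Local Open Scope ring_scope.

Section Defs.
Variable R : realType.

Definition in01 (x : R) : Prop := 0 <= x <= 1.

Definition uninorm (f : R -> R -> R) : Prop :=
  [/\ (forall x y, in01 x -> in01 y -> in01 (f x y)),
      (forall x y, in01 x -> in01 y -> f x y = f y x),
      (forall x y z, in01 x -> in01 y -> in01 z -> f x (f y z) = f (f x y) z),
      (forall x y z, in01 x -> in01 y -> in01 z -> x <= y -> f x z <= f y z)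
    & (exists2 e, in01 e & forall x, in01 x -> f e x = x)].

Definition Tnorm (f : R -> R -> R) : Prop :=
  uninorm f /\ forall x, in01 x -> f 1 x = x.

Definition Tconorm (f : R -> R -> R) : Prop :=
  uninorm f /\ forall x, in01 x -> f 0 x = x.

Definition no_zero_divisors (f : R -> R -> R) : Prop :=
  forall x y, 0 < x < 1 -> 0 < y < 1 -> f x y <> 0.

Definition drastic_min (x y : R) : R :=
  if Num.max x y == 1 then Num.min x y else 0.
Definition drastic_max (x y : R) : R :=
  if Num.min x y == 0 then Num.max x y else 1.

Definition Phi (oplus : R -> R -> R) (x y : R) : R :=
  1 - oplus (1 - x) (1 - y).

Definition opfold (op : R -> R -> R) (n : nat) (a : 'I_n.+1 -> R) : R :=
  foldl op (a ord0) [seq a (lift ord0 i) | i : 'I_n].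

Definition nondecr (n : nat) (x : 'I_n.+1 -> R) : Prop :=
  forall i j : 'I_n.+1, (i <= j)%N -> x i <= x j.

(* Rearrangement inequality; sequences of length n+1, i.e. every length >= 1.
   x (rev_ord i) is x_{n+1-i} in 1-based indexing. *)
Definition rearrangement (otimes oplus : R -> R -> R) : Prop :=
  forall (n : nat) (x y : 'I_n.+1 -> R),
    (forall i, in01 (x i)) -> (forall i, in01 (y i)) ->
    nondecr x -> nondecr y ->
    forall s : 'S_n.+1,
      opfold oplus (fun i => otimes (x (rev_ord i)) (y i))
        <= opfold oplus (fun i => otimes (x (s i)) (y i))
      /\ opfold oplus (fun i => otimes (x (s i)) (y i))
        <= opfold oplus (fun i => otimes (x i) (y i)).

Definition dual_rearrangement (otimes oplus : R -> R -> R) : Prop :=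
  forall (n : nat) (x y : 'I_n.+1 -> R),
    (forall i, in01 (x i)) -> (forall i, in01 (y i)) ->
    nondecr x -> nondecr y ->
    forall s : 'S_n.+1,
      opfold otimes (fun i => oplus (x (s i)) (y i))
        <= opfold otimes (fun i => oplus (x (rev_ord i)) (y i))
      /\ opfold otimes (fun i => oplus (x i) (y i))
        <= opfold otimes (fun i => oplus (x (s i)) (y i)).

End Defs.

(* Main.v *)
Require Import Defs.
From mathcomp Require Import all_boot all_order all_algebra all_fingroup.
From mathcomp Require Import reals zify lra.
Set Implicit Arguments. Unset Strict Implicit. Unset Printing Implicit Defensive.
Import Order.TTheory GRing.Theory Num.Theory.
Local Open Scope ring_scope.

Lemma dmax_nn (R : realType) (u v : R) : 0 <= u -> 0 <= v ->
  drastic_max u v = if u == 0 then v else if v == 0 then u else 1.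
Proof.
move=> u0 v0; rewrite /drastic_max.
have [->|uz] := eqVneq u 0; first by rewrite (min_idPl v0) (max_idPr v0) eqxx.
have [->|vz] := eqVneq v 0; first by rewrite (min_idPr u0) (max_idPl u0) eqxx.
have up : 0 < u by rewrite lt_def uz.
have vp : 0 < v by rewrite lt_def vz.
have : 0 < Num.min u v by rewrite lt_min up vp.
by rewrite lt_def => /andP[/negPf -> _].
Qed.

Lemma sum0_seq (R : realType) (l : seq R) :
  count (fun v => v != 0) l = 0%N -> \sum_(v <- l) v = 0.
Proof.
elim: l => [|b l IH]; first by rewrite big_nil.
rewrite /= big_cons; case: eqP => //= -> /IH ->; by rewrite addr0.
Qed.

Lemma foldl_dmax (R : realType) (l : seq R) (a0 : R) : 0 <= a0 ->
  all (fun v => 0 <= v) l ->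
  foldl (@drastic_max R) a0 l =
  if (1 < count (fun v : R => v != 0%R) (a0 :: l))%N then 1 else \sum_(v <- a0 :: l) v.
Proof.
elim: l a0 => [|b l IH] a0 a00 /=.
  by rewrite big_cons big_nil addr0; case: eqP.
move=> /andP[b0 l0]; rewrite IH //; last first.
  rewrite dmax_nn //; case: eqP => // _; case: eqP => // _.
rewrite dmax_nn // !big_cons.
have [->|az] := eqVneq a0 0.
  by rewrite /= add0r.
have [->|bz] := eqVneq b 0.
  by rewrite /= az add0r.
rewrite /= oner_eq0 /=.
case: (count _ l) (@sum0_seq R l) => [|c] //=.
by move=> ->; rewrite // addr0.
Qed.

Lemma cnt (T : finType) (P : pred T) : count P (enum T) = #|[set i | P i]|.
Proof. rewrite -sum1_count big_enum_cond /= cardsE -sum1_card. by apply: eq_bigl => i. Qed.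

Lemma G_eq (R : realType) n (a : 'I_n.+1 -> R) : (forall i, 0 <= a i) ->
  opfold (@drastic_max R) a =
  if (1 < #|[set i | a i != 0%R]|)%N then 1 else \sum_i a i.
Proof.
move=> a0.
have E : a ord0 :: [seq a (lift ord0 i) | i : 'I_n] = map a (enum 'I_n.+1).
  by rewrite enum_ordSl /= -map_comp.
rewrite /opfold foldl_dmax //; last first.
  by apply/allP => v /mapP[i _ ->]; exact: a0.
rewrite E count_map cnt big_map big_enum /=.
by congr (if _ then _ else _); apply: eq_card => i; rewrite !inE.
Qed.

Lemma card_ge N m : #|[set k : 'I_N | (m <= k)%N]| = (N - m)%N.
Proof.
rewrite cardsE -sum1_card.
transitivity (\sum_(m <= i < N) 1)%N; last by rewrite sum_nat_const_nat muln1.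
by rewrite big_geq_mkord; apply: eq_bigl => i.
Qed.

Lemma pigeon N (s : 'I_N -> 'I_N) (sinj : injective s) (m1 m2 : nat) :
  ((N - m1) + (N - m2) <= #|[set k : 'I_N | (m1 <= k)%N && (m2 <= s k)%N]| + N)%N.
Proof.
set A := [set k : 'I_N | (m1 <= k)%N]; set B := [set k : 'I_N | (m2 <= s k)%N].
have -> : [set k : 'I_N | (m1 <= k)%N && (m2 <= s k)%N] = A :&: B.
  by apply/setP => k; rewrite !inE.
have cA : #|A| = (N - m1)%N by rewrite card_ge.
have cB : #|B| = (N - m2)%N.
  have -> : B = s @^-1: [set k : 'I_N | (m2 <= k)%N] by apply/setP => k; rewrite !inE.
  by rewrite card_preimset // card_ge.
have := cardsUI A B; have := max_card (A :|: B); rewrite card_ord.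
lia.
Qed.

Section G.
Context (R : realType) (n : nat).
Implicit Types (a : 'I_n.+1 -> R).

Lemma G1 a : (forall i, 0 <= a i) -> forall i j, i != j -> a i != 0 -> a j != 0 ->
  opfold (@drastic_max R) a = 1.
Proof.
move=> a0 i j ij ai aj; rewrite G_eq // ifT //; apply/card_gt1P.
by exists i, j; rewrite !inE.
Qed.

Lemma G2 a : (forall i, 0 <= a i) -> ~~ (1 < #|[set i | a i != 0%R]|)%N ->
  exists k, opfold (@drastic_max R) a = a k.
Proof.
move=> a0 H; rewrite G_eq // (negPf H).
case: (pickP (fun i => a i != 0)) => [k ak|none].
  exists k; rewrite (bigD1 k) //= big1 ?addr0 // => j jk.
  apply/eqP; apply: contraNT H => aj; apply/card_gt1P.
  by exists k, j; rewrite !inE ak aj eq_sym jk.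
exists ord0; rewrite big1; last by move=> i _; move/negbFE/eqP: (none i).
by move/negbFE/eqP: (none ord0).
Qed.

Lemma G3 a : (forall i, in01 (a i)) -> forall k, a k <= opfold (@drastic_max R) a.
Proof.
move=> a01 k; have a0 : forall i, 0 <= a i by move=> i; case/andP: (a01 i).
rewrite G_eq //; case: ifP => _; first by case/andP: (a01 k).
rewrite (bigD1 k) //= lerDl sumr_ge0 //.
Qed.

Lemma G4 a : (forall i, in01 (a i)) -> in01 (opfold (@drastic_max R) a).
Proof.
move=> a01; have a0 : forall i, 0 <= a i by move=> i; case/andP: (a01 i).
case: (boolP (1 < #|[set i | a i != 0%R]|)%N) => H.
  by rewrite G_eq // H /in01 ler01 lexx.
by have [k ->] := G2 a0 H.
Qed.

Lemma G_inj a (h : 'I_n.+1 -> 'I_n.+1) : injective h -> (forall i, 0 <= a i) ->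
  opfold (@drastic_max R) (fun i => a (h i)) = opfold (@drastic_max R) a.
Proof.
move=> hinj a0; rewrite !G_eq //.
have -> : [set i | a (h i) != 0] = h @^-1: [set i | a i != 0].
  by apply/setP => k; rewrite !inE.
by rewrite card_preimset // [in RHS](reindex_inj hinj).
Qed.

End G.

Definition goodT (R : realType) (f : R -> R -> R) :=
  [/\ (forall x y, in01 x -> in01 y -> in01 (f x y)),
      (forall x y x' y', in01 x -> in01 y -> in01 x' -> in01 y' ->
          x <= x' -> y <= y' -> f x y <= f x' y')
    & (forall x y, in01 x -> in01 y -> (f x y != 0) = (x != 0) && (y != 0))].

Lemma goodT_of (R : realType) (f : R -> R -> R) :
  (forall x y, in01 x -> in01 y -> in01 (f x y)) ->
  (forall x y, in01 x -> in01 y -> f x y = f y x) ->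
  (forall x y z, in01 x -> in01 y -> in01 z -> x <= y -> f x z <= f y z) ->
  (forall x, in01 x -> f 1 x = x) ->
  no_zero_divisors f -> goodT f.
Proof.
move=> Hc Hcomm Hm H1 Hz.
have i1 : in01 (1 : R) by rewrite /in01 ler01 lexx.
have i0 : in01 (0 : R) by rewrite /in01 ler01 lexx.
have Hm2 : forall x y x' y', in01 x -> in01 y -> in01 x' -> in01 y' ->
          x <= x' -> y <= y' -> f x y <= f x' y'.
  move=> x y x' y' ix iy ix' iy' xx yy.
  apply: (le_trans (Hm _ _ _ ix ix' iy xx)).
  by rewrite (Hcomm x') // (Hcomm x') //; apply: Hm.
have fx0 : forall x, in01 x -> f x 0 = 0.
  move=> x ix; apply/eqP; rewrite eq_le; case/andP: (Hc _ _ ix i0) => -> _.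
  rewrite andbT -[X in _ <= X](H1 0 i0).
  by apply: Hm => //; case/andP: ix.
split => // x y ix iy.
have [->|x0] := eqVneq x 0; first by rewrite Hcomm // fx0 // eqxx.
have [->|y0] := eqVneq y 0; first by rewrite fx0 // eqxx andbF.
rewrite /=.
have [->|x1] := eqVneq x 1; first by rewrite H1.
have [->|y1] := eqVneq y 1; first by rewrite Hcomm // H1.
apply/eqP; apply: Hz.
  by case/andP: ix => a b; rewrite lt_def x0 a /= lt_def eq_sym x1 b.
by case/andP: iy => a b; rewrite lt_def y0 a /= lt_def eq_sym y1 b.
Qed.

Lemma nz_mono (R : realType) (a b : R) : 0 <= a -> a <= b -> a != 0 -> b != 0.
Proof.
move=> a0 ab az; have ap : 0 < a by rewrite lt_def az a0.
by rewrite gt_eqF // (lt_le_trans ap ab).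
Qed.

Section Core.
Context (R : realType) (T : R -> R -> R) (HT : goodT T) (n : nat)
  (x y : 'I_n.+1 -> R) (x01 : forall i, in01 (x i)) (y01 : forall i, in01 (y i))
  (xm : nondecr x) (ym : nondecr y) (s : 'I_n.+1 -> 'I_n.+1) (sinj : injective s).

Lemma x0 i : 0 <= x i. Proof. by case/andP: (x01 i). Qed.
Lemma y0 i : 0 <= y i. Proof. by case/andP: (y01 i). Qed.

Lemma core_lower :
  opfold (@drastic_max R) (fun i => T (x (rev_ord i)) (y i))
  <= opfold (@drastic_max R) (fun i => T (x (s i)) (y i)).
Proof.
case: HT => Tc Tm Tz.
set r := fun i => T (x (rev_ord i)) (y i).
set m := fun i => T (x (s i)) (y i).
have r01 : forall i, in01 (r i) by move=> i; apply: Tc.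
have m01 : forall i, in01 (m i) by move=> i; apply: Tc.
have r0 : forall i, 0 <= r i by move=> i; case/andP: (r01 i).
have m0 : forall i, 0 <= m i by move=> i; case/andP: (m01 i).
have [/card_gt1P [i [j [Hi Hj ij]]] | H] := boolP (1 < #|[set i | r i != 0%R]|)%N.
  rewrite !inE in Hi Hj.
  have W : forall i j : 'I_n.+1, (i < j)%N -> r i != 0 -> r j != 0 ->
      opfold (@drastic_max R) m = 1.
    move=> a b lt_ab Ha Hb.
    rewrite /r Tz // in Ha; rewrite /r Tz // in Hb.
    case/andP: Ha => xi yi; case/andP: Hb => xj yj.
    have := pigeon sinj a (rev_ord b); rewrite /= !subSS => P.
    have : (1 < #|[set k : 'I_n.+1 | (a <= k)%N && (n - b <= s k)%N]|)%N.
      move: P; set K := #|_|; move=> P; have := ltn_ord b; lia.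
    case/card_gt1P => k [l [Hk Hl kl]]; rewrite !inE in Hk Hl.
    case/andP: Hk => ik jk; case/andP: Hl => il jl.
    apply: (G1 m0 kl); rewrite /m Tz //; apply/andP; split.
    - by apply: (nz_mono (x0 _) _ xj); apply: xm.
    - by apply: (nz_mono (y0 _) _ yi); apply: ym.
    - by apply: (nz_mono (x0 _) _ xj); apply: xm.
    - by apply: (nz_mono (y0 _) _ yi); apply: ym.
  rewrite (_ : opfold _ m = 1); first by case/andP: (G4 r01).
  case: (ltngtP i j) => c; first exact: (W i j).
    exact: (W j i).
  by move/val_inj: c => c; rewrite c eqxx in ij.
have [k0 ->] := G2 r0 H.
have := pigeon sinj k0 (rev_ord k0); rewrite /= !subSS => P.
have : (0 < #|[set k : 'I_n.+1 | (k0 <= k)%N && (n - k0 <= s k)%N]|)%N.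
  move: P; set K := #|_|; move=> P; have := ltn_ord k0; lia.
case/card_gt0P => k; rewrite inE => /andP[ik jk].
apply: (le_trans _ (G3 m01 k)); apply: Tm => //.
  by apply: xm.
by apply: ym.
Qed.

Lemma core_upper :
  opfold (@drastic_max R) (fun i => T (x (s i)) (y i))
  <= opfold (@drastic_max R) (fun i => T (x i) (y i)).
Proof.
case: HT => Tc Tm Tz.
set e := fun i => T (x i) (y i).
set m := fun i => T (x (s i)) (y i).
have e01 : forall i, in01 (e i) by move=> i; apply: Tc.
have m01 : forall i, in01 (m i) by move=> i; apply: Tc.
have e0 : forall i, 0 <= e i by move=> i; case/andP: (e01 i).
have m0 : forall i, 0 <= m i by move=> i; case/andP: (m01 i).
have [/card_gt1P [k [l [Hk Hl kl]]] | H] := boolP (1 < #|[set i | m i != 0%R]|)%N.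
  rewrite !inE /m Tz // in Hk; rewrite !inE /m Tz // in Hl.
  case/andP: Hk => xk yk; case/andP: Hl => xl yl.
  have skl : s k != s l by apply: contra kl => /eqP /sinj ->.
  have kl' : (k : nat) != l by [].
  have skl' : (s k : nat) != s l by [].
  set c := maxn (minn (s k) (s l)) (minn k l).
  have : (1 < #|[set i : 'I_n.+1 | (c <= i)%N]|)%N.
    rewrite card_ge; have := ltn_ord k; have := ltn_ord l;
    have := ltn_ord (s k); have := ltn_ord (s l); rewrite /c; lia.
  case/card_gt1P => i [j [Hi Hj ij]]; rewrite !inE in Hi Hj.
  have xnz : forall i : 'I_n.+1, (c <= i)%N -> x i != 0.
    move=> i' ci; have : (s k <= i')%N || (s l <= i')%N by rewrite /c in ci; lia.
    case/orP => h; [apply: (nz_mono (x0 (s k)) _ xk)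
                  | apply: (nz_mono (x0 (s l)) _ xl)]; exact: xm.
  have ynz : forall i : 'I_n.+1, (c <= i)%N -> y i != 0.
    move=> i' ci; have : (k <= i')%N || (l <= i')%N by rewrite /c in ci; lia.
    case/orP => h; [apply: (nz_mono (y0 k) _ yk)
                  | apply: (nz_mono (y0 l) _ yl)]; exact: ym.
  rewrite (G1 e0 ij); first by case/andP: (G4 m01).
    by rewrite /e Tz // xnz ?ynz.
  by rewrite /e Tz // xnz ?ynz.
have [k0 ->] := G2 m0 H.
apply: (le_trans _ (G3 e01 ord_max)); apply: Tm => //.
  by apply: xm; rewrite /= -ltnS.
by apply: ym; rewrite /= -ltnS.
Qed.

End Core.

Lemma dmin_dmax (R : realType) (u v : R) :
  drastic_max (1 - u) (1 - v) = 1 - drastic_min u v.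
Proof.
rewrite /drastic_max /drastic_min.
case: (lerP u v) => h.
  have h' : 1 - v <= 1 - u by lra.
  rewrite (min_idPr h') (max_idPl h') subr_eq0 eq_sym.
  by case: eqP => _; rewrite ?subr0.
have h' : 1 - u <= 1 - v by lra.
have hw := ltW h.
rewrite (min_idPl h') (max_idPr h') subr_eq0 eq_sym.
by case: eqP => _; rewrite ?subr0.
Qed.

Lemma foldl_dmin (R : realType) (l : seq R) (a0 : R) :
  foldl (@drastic_min R) a0 l =
  1 - foldl (@drastic_max R) (1 - a0) (map (fun v => 1 - v) l).
Proof.
elim: l a0 => [|b l IH] a0 /=; first by rewrite subKr.
by rewrite IH dmin_dmax.
Qed.

Lemma opfold_dmin (R : realType) n (a : 'I_n.+1 -> R) :
  opfold (@drastic_min R) a = 1 - opfold (@drastic_max R) (fun i => 1 - a i).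
Proof. by rewrite /opfold foldl_dmin /image_mem -map_comp. Qed.

Lemma eq_opfold (R : realType) (op : R -> R -> R) n (a b : 'I_n.+1 -> R) :
  a =1 b -> opfold op a = opfold op b.
Proof.
move=> E; rewrite /opfold /image_mem E; congr foldl; apply: eq_map => i.
by rewrite E.
Qed.

Lemma in01C (R : realType) (a : R) : in01 a -> in01 (1 - a).
Proof. by rewrite /in01 => /andP[h1 h2]; apply/andP; split; lra. Qed.

Theorem theorem12 (R : realType) :
  (forall otimes : R -> R -> R,
      Tnorm otimes -> no_zero_divisors otimes ->
      rearrangement otimes (@drastic_max R))
  /\
  (forall oplus : R -> R -> R,
      Tconorm oplus -> no_zero_divisors (Phi oplus) ->
      dual_rearrangement (@drastic_min R) oplus).
Proof.
split.
  move=> otimes [[Hc Hcomm _ Hm _] H1] Hnz n x y x01 y01 xm ym s.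
  have HT := goodT_of Hc Hcomm Hm H1 Hnz.
  split.
    exact: (core_lower HT x01 y01 xm ym (@perm_inj _ s)).
  exact: (core_upper HT x01 y01 xm ym (@perm_inj _ s)).
move=> oplus [[Hc Hcomm _ Hm _] H0] Hnz n x y x01 y01 xm ym s.
have i1 : in01 (1 : R) by rewrite /in01 ler01 lexx.
have HT : goodT (Phi oplus).
  apply: goodT_of => //.
  - by move=> a b ia ib; rewrite /Phi; apply: in01C; apply: Hc; apply: in01C.
  - by move=> a b ia ib; rewrite /Phi Hcomm //; apply: in01C.
  - move=> a b c ia ib ic ab; rewrite /Phi lerD2l lerN2; apply: Hm; try exact: in01C.
    lra.
  - by move=> a ia; rewrite /Phi subrr H0 ?subKr //; apply: in01C.
case: (HT) => Tc _ _.
set x' := fun i => 1 - x (rev_ord i).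
set y' := fun i => 1 - y (rev_ord i).
set s' := fun i => rev_ord (s (rev_ord i)).
have x'01 : forall i, in01 (x' i) by move=> i; apply: in01C.
have y'01 : forall i, in01 (y' i) by move=> i; apply: in01C.
have x'm : nondecr x'.
  move=> i j ij; rewrite /x' lerD2l lerN2; apply: xm => /=.
  have := ltn_ord i; have := ltn_ord j; lia.
have y'm : nondecr y'.
  move=> i j ij; rewrite /y' lerD2l lerN2; apply: ym => /=.
  have := ltn_ord i; have := ltn_ord j; lia.
have s'inj : injective s'.
  by move=> i j /rev_ord_inj /perm_inj /rev_ord_inj.
have P0 : forall (f : 'I_n.+1 -> 'I_n.+1) i, 0 <= Phi oplus (x' (f i)) (y' i).
  by move=> f i; case/andP: (Tc _ _ (x'01 (f i)) (y'01 i)).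
have Es : opfold (@drastic_max R) (fun i => 1 - oplus (x (s i)) (y i)) =
          opfold (@drastic_max R) (fun i => Phi oplus (x' (s' i)) (y' i)).
  rewrite -(G_inj (a := fun i => Phi oplus (x' (s' i)) (y' i)) (@rev_ord_inj _)) //.
  apply: eq_opfold => i.
  by rewrite /Phi /x' /y' /s' !rev_ordK !subKr.
have Er : opfold (@drastic_max R) (fun i => 1 - oplus (x (rev_ord i)) (y i)) =
          opfold (@drastic_max R) (fun i => Phi oplus (x' (rev_ord i)) (y' i)).
  rewrite -(G_inj (a := fun i => Phi oplus (x' (rev_ord i)) (y' i)) (@rev_ord_inj _)) //.
  apply: eq_opfold => i.
  by rewrite /Phi /x' /y' !rev_ordK !subKr.
have Ei : opfold (@drastic_max R) (fun i => 1 - oplus (x i) (y i)) =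
          opfold (@drastic_max R) (fun i => Phi oplus (x' i) (y' i)).
  rewrite -(G_inj (a := fun i => Phi oplus (x' i) (y' i)) (@rev_ord_inj _)) //.
    apply: eq_opfold => i.
    by rewrite /Phi /x' /y' !rev_ordK !subKr.
  by move=> i; apply: (P0 id).
rewrite !opfold_dmin !lerD2l !lerN2 Es Er Ei.
split.
  exact: (core_lower HT x'01 y'01 x'm y'm s'inj).
exact: (core_upper HT x'01 y'01 x'm y'm s'inj).
Qed.
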